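(* Let $\underline\lambda=(\lambda^1,1^m)$ be a bipartition of $n$ whose second component is a single column, so that $M^{\underline\lambda}$ is an $\mathcal R_n$-module. For every standard bitableau $U=(U^1,U^2)$ of shape $\underline\lambda$ and every $1\le i\le n$, $$L_iv_U=\epsilon_i\,\mathbf q^{c_U(i)}v_U,\qquad \epsilon_i=\begin{cases}1& i\in U^1\\ 0& i\in U^2.\end{cases}$$
   Context: $\mathbf q$ is an indeterminate. $\mathcal R_n$ is the generic mirabolic Hecke algebra over $\mathbb C(\mathbf q)$, identified with $\mathcal H_n(1,0)/I_n^{(\emptyset,2)}$, where $\mathcal H_n(1,0)$ has generators $X,T_1,\dots,T_{n-1}$ (Hecke relations, $XT_i=T_iX$ for $i\ge2$, $XT_1XT_1=T_1XT_1X$, $X^2=X$), $I_n^{(\emptyset,2)}$ is generated by $1-X+T_1-XT_1-T_1X+XT_1X-T_1XT_1+XT_1XT_1$, and $e\in\mathcal R_n$ is the image of $X$. The Jucys–Murphy elements of $\mathcal R_n$ are $L_i=\mathbf q^{1-i}T_{i-1}\cdots T_1eT_1\cdots T_{i-1}$, $i=1,\dots,n$. Standard bitableaux, contents $c_U(i)=(j-1)+(\text{column}-\text{row of } i \text{ in } U^j)$ for $i\in U^j$, and the modules $M^{\underline\lambda}$ with basis $\{v_U\}$ are as in Ariki–Koike: $Xv_U=v_U$ if $1\in U^1$, $0$ if $1\in U^2$; $T_iv_U=\mathbf q v_U$ (same row, same tableau), $-v_U$ (same column, same tableau), $\frac{\mathbf q-1}{1-\mathbf q^{d}}v_U+(1+\frac{\mathbf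 q-1}{1-\mathbf q^{d}})v_{s_i(U)}$ with $d=c_U(i)-c_U(i+1)$ (same tableau otherwise), $v_{s_i(U)}$ ($i\in U^1,i+1\in U^2$), $(\mathbf q-1)v_U+\mathbf q v_{s_i(U)}$ ($i\in U^2,i+1\in U^1$). *)

(* Defs.v *)
From HB Require Import structures.
From mathcomp Require Import all_boot all_order all_algebra algC.
Unset Printing Implicit Defensive.
Import GRing.Theory Num.Theory.
Local Open Scope ring_scope.

Notation Fq := {fraction {poly algC}}.
Definition q : Fq := tofrac ('X : {poly algC}).

(* A cell of a bitableau: (component, row, column), 0-based row/column;
   component false = U^1, true = U^2. *)
Definition cell (n : nat) := (bool * 'I_n * 'I_n)%type.
Definition ccomp {n} (c : cell n) : bool := c.1.1.
Definition crow {n} (c : cell n) : nat := c.1.2.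
Definition ccol {n} (c : cell n) : nat := c.2.

(* A bitableau filled with 1..n: entry e (1 <= e <= n) sits at ordinal e-1. *)
Definition bitab (n : nat) := {ffun 'I_n -> cell n}.

Definition ent {n} (U : bitab n) (e : nat) : option (cell n) :=
  if (0 < e)%N then omap U (insub e.-1 : option 'I_n) else None.

Definition is_partition (lam : seq nat) : bool :=
  sorted geq lam && all (fun x => 0 < x)%N lam.

Definition in_shape (lam : seq nat) (m : nat) {n} (c : cell n) : bool :=
  if ccomp c then (ccol c == 0%N) && (crow c < m)%N
  else (crow c < size lam)%N && (ccol c < nth 0%N lam (crow c))%N.

Definition standard (lam : seq nat) (m n : nat) (U : bitab n) : bool :=
  [&& injectiveb U,
      [forall k, in_shape lam m (U k)],
      [forall c : cell n, in_shape lam m c ==> [exists k, U k == c]],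
      [forall k, forall l,
         [&& ccomp (U k) == ccomp (U l), crow (U k) == crow (U l)
           & (ccol (U k) < ccol (U l))%N] ==> (k < l)%N] &
      [forall k, forall l,
         [&& ccomp (U k) == ccomp (U l), ccol (U k) == ccol (U l)
           & (crow (U k) < crow (U l))%N] ==> (k < l)%N]].

(* content c_U(e) = (j-1) + (column - row) for e in U^j *)
Definition content {n} (U : bitab n) (e : nat) : int :=
  match ent U e with
  | Some c => (nat_of_bool (ccomp c))%:Z + (ccol c)%:Z - (crow c)%:Z
  | None => 0
  end.

Definition eps {n} (U : bitab n) (e : nat) : Fq :=
  match ent U e with
  | Some c => if ccomp c then 0 else 1
  | None => 0
  end.

(* s_i(U): exchange the entries i and i+1 *)
Definition swapU {n} (U : bitab n) (i : nat) : bitab n :=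
  [ffun k : 'I_n => if (k.+1 == i)%N then odflt (U k) (ent U i.+1)
                    else if (k.+1 == i.+1)%N then odflt (U k) (ent U i)
                    else U k].

(* vectors of M^lambda: coordinates w.r.t. the basis (v_U) *)
Notation vec n := {ffun bitab n -> Fq^o}.
Definition bv {n} (U : bitab n) : vec n := [ffun W => (W == U)%:R].

Definition Tb {n} (i : nat) (U : bitab n) : vec n :=
  match ent U i, ent U i.+1 with
  | Some a, Some b =>
      if ccomp a == ccomp b then
        if crow a == crow b then q *: bv U
        else if ccol a == ccol b then - bv U
        else let d := content U i - content U i.+1 in
             let c := (q - 1) / (1 - q ^ d) in
             c *: bv U + (1 + c) *: bv (swapU U i)
      else if ~~ ccomp a then bv (swapU U i)
      else (q - 1) *: bv U + q *: bv (swapU U i)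
  | _, _ => 0
  end.

(* action of X (image e) on v_U *)
Definition Xb {n} (U : bitab n) : vec n :=
  match ent U 1 with
  | Some a => if ccomp a then 0 else bv U
  | None => 0
  end.

Definition act (lam : seq nat) (m n : nat) (B : bitab n -> vec n) (v : vec n)
  : vec n := \sum_(U | standard lam m n U) v U *: B U.

Definition Tact lam m n (i : nat) := act lam m n (Tb i).
Definition Xact lam m n := act lam m n Xb.

(* Tright k v = T_1 (T_2 (... (T_k v))) ; Tleft k v = T_k (... (T_1 v)) *)
Fixpoint Tright lam m n (k : nat) (v : vec n) : vec n :=
  match k with 0 => v | k'.+1 => Tright lam m n k' (Tact lam m n k'.+1 v) end.
Fixpoint Tleft lam m n (k : nat) (v : vec n) : vec n :=
  match k with 0 => v | k'.+1 => Tact lam m n k'.+1 (Tleft lam m n k' v) end.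

(* Jucys-Murphy element L_i = q^(1-i) T_(i-1)...T_1 e T_1...T_(i-1) acting on M^lambda *)
Definition Lact lam m n (i : nat) (v : vec n) : vec n :=
  q ^ (1 - (i%:Z)) *: Tleft lam m n (i.-1) (Xact lam m n (Tright lam m n (i.-1) v)).

(* Main.v *)
Require Import Defs.
From HB Require Import structures.
From mathcomp Require Import all_boot all_order all_algebra algC.
From mathcomp Require Import zify ring.
Import GRing.Theory Num.Theory.
Local Open Scope ring_scope.

Section Lin.
Variables (lam : seq nat) (m n : nat).

Lemma actD B (v w : vec n) : act lam m n B (v + w) = act lam m n B v + act lam m n B w.
Proof. rewrite /act -big_split /=; apply: eq_bigr => U _; by rewrite ffunE scalerDl. Qed.

Lemma actZ B (a : Fq) (v : vec n) : act lam m n B (a *: v) = a *: act lam m n B v.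
Proof. rewrite /act scaler_sumr; apply: eq_bigr => U _; by rewrite ffunE scalerA. Qed.

Lemma act0 B : act lam m n B 0 = 0.
Proof. rewrite /act big1 // => U _; by rewrite ffunE scale0r. Qed.

Lemma act_bv B U : standard lam m n U -> act lam m n B (bv U) = B U.
Proof.
move=> sU; rewrite /act. rewrite (bigD1 U) //=. rewrite big1 ?addr0.
  by rewrite ffunE eqxx scale1r.
by move=> W /andP[_ hW]; rewrite ffunE (negbTE hW) scale0r.
Qed.

Lemma TrightD k (v w : vec n) : Tright lam m n k (v + w) = Tright lam m n k v + Tright lam m n k w.
Proof. elim: k v w => [//|k IH] v w /=; by rewrite /Tact actD IH. Qed.
Lemma TrightZ k a (v : vec n) : Tright lam m n k (a *: v) = a *: Tright lam m n k v.
Proof. elim: k v => [//|k IH] v /=; by rewrite /Tact actZ IH. Qed.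
Lemma TleftD k (v w : vec n) : Tleft lam m n k (v + w) = Tleft lam m n k v + Tleft lam m n k w.
Proof. elim: k v w => [//|k IH] v w /=; by rewrite /Tact IH actD. Qed.
Lemma TleftZ k a (v : vec n) : Tleft lam m n k (a *: v) = a *: Tleft lam m n k v.
Proof. elim: k v => [//|k IH] v /=; by rewrite /Tact IH actZ. Qed.

Lemma LactD k (v w : vec n) : Lact lam m n k (v + w) = Lact lam m n k v + Lact lam m n k w.
Proof. by rewrite /Lact TrightD /Xact actD TleftD scalerDr. Qed.
Lemma LactZ k a (v : vec n) : Lact lam m n k (a *: v) = a *: Lact lam m n k v.
Proof. by rewrite /Lact TrightZ /Xact actZ TleftZ !scalerA mulrC. Qed.

Lemma q_neq0 : q != 0.
Proof. by rewrite /q tofrac_eq0 polyX_eq0. Qed.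

Lemma TleftS k (v : vec n) : Tleft lam m n k.+1 v = Tact lam m n k.+1 (Tleft lam m n k v).
Proof. by []. Qed.
Lemma TrightS k (v : vec n) : Tright lam m n k.+1 v = Tright lam m n k (Tact lam m n k.+1 v).
Proof. by []. Qed.

Lemma Lact_rec k (v : vec n) : Lact lam m n k.+2 v =
  q^-1 *: Tact lam m n k.+1 (Lact lam m n k.+1 (Tact lam m n k.+1 v)).
Proof.
rewrite /Lact. change (k.+2).-1 with k.+1. change (k.+1).-1 with k.
rewrite TleftS TrightS /Tact actZ scalerA; congr (_ *: _).
rewrite -exprN1 -(expfzDr _ _ q_neq0); congr (_ ^ _).
lia.
Qed.

End Lin.


Lemma entE n (U : bitab n) (k : 'I_n) : ent U k.+1 = Some (U k).
Proof. by rewrite /ent ltn0Sn /= valK. Qed.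

Lemma cell_eq n (c d : cell n) : ccomp c = ccomp d -> crow c = crow d -> ccol c = ccol d -> c = d.
Proof.
case: c => [[c1 c2] c3]; case: d => [[d1 d2] d3]; rewrite /ccomp /crow /ccol /=.
by move=> -> /val_inj -> /val_inj ->.
Qed.

Lemma stdP lam m n (U : bitab n) : standard lam m n U ->
  [/\ injective U, forall k, in_shape lam m (U k),
      forall c : cell n, in_shape lam m c -> exists k, U k = c,
      forall k l, ccomp (U k) = ccomp (U l) -> crow (U k) = crow (U l) ->
        (ccol (U k) < ccol (U l))%N -> (k < l)%N
    & forall k l, ccomp (U k) = ccomp (U l) -> ccol (U k) = ccol (U l) ->
        (crow (U k) < crow (U l))%N -> (k < l)%N].
Proof.
case/and5P => /injectiveP inj /forallP sh /forallP ex /forallP rw /forallP cl; split => //.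
- move=> c hc; move/implyP: (ex c) => /(_ hc) /existsP [k /eqP]; by exists k.
- move=> k l h1 h2 h3; move/forallP: (rw k) => /(_ l) /implyP; apply.
  by rewrite h1 h2 h3 !eqxx.
- move=> k l h1 h2 h3; move/forallP: (cl k) => /(_ l) /implyP; apply.
  by rewrite h1 h2 h3 !eqxx.
Qed.

Lemma nth_mono lam i j : is_partition lam -> (i <= j)%N -> (j < size lam)%N ->
  (nth 0 lam j <= nth 0 lam i)%N.
Proof.
case/andP => s _ hij hj.
have tr : transitive geq by move=> y x z h1 h2; apply: leq_trans h2 h1.
have := sorted_leq_nth tr (fun x => leqnn x) 0%N s; apply => //; rewrite inE; lia.
Qed.

Section Comb.
Variables (lam : seq nat) (m n : nat).
Hypothesis Hp : is_partition lam.
Variable U : bitab n.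
Hypothesis HU : standard lam m n U.
Variables o1 o2 : 'I_n.
Hypothesis Ho : nat_of_ord o2 = (nat_of_ord o1).+1.

Lemma adj_row : ccomp (U o1) = ccomp (U o2) -> crow (U o1) = crow (U o2) ->
  ccol (U o2) = (ccol (U o1)).+1.
Proof.
have [inj sh ex rw cl] := @stdP lam m n U HU.
move=> hc hr.
have lt : (ccol (U o1) < ccol (U o2))%N.
  case: (ltngtP (ccol (U o1)) (ccol (U o2))) => // h.
    have := rw o2 o1 (esym hc) (esym hr) h; lia.
  have : o1 = o2 by apply: inj; apply: cell_eq.
  move=> e; move: Ho; rewrite e. lia.
case: (ltngtP (ccol (U o1)).+1 (ccol (U o2))) => // h; last lia.
have hn : ((ccol (U o1)).+1 < n)%N by have := ltn_ord (U o2).2; rewrite /ccol in h *; lia.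
pose c : cell n := (ccomp (U o1), (U o1).1.2, Ordinal hn).
have hcs : in_shape lam m c.
  move: (sh o2); rewrite /in_shape /c /ccomp /crow /ccol /=.
  rewrite /ccomp /crow /ccol in hc hr h lt; rewrite hc hr.
  case: ((U o2).1.1) => /andP [] /eqP h0; last lia.
  rewrite h0 in lt; lia.
have [e he] := ex c hcs.
have h1 := rw o1 e; have h2 := rw e o2.
rewrite he /c /ccomp /crow /ccol /= in h1 h2.
rewrite /ccomp /crow /ccol in hc hr h.
have := h1 erefl erefl (ltnSn _); have := h2 hc hr h; lia.
Qed.

Lemma adj_col : ccomp (U o1) = ccomp (U o2) -> ccol (U o1) = ccol (U o2) ->
  crow (U o2) = (crow (U o1)).+1.
Proof.
have [inj sh ex rw cl] := @stdP lam m n U HU.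
move=> hc hr.
have lt : (crow (U o1) < crow (U o2))%N.
  case: (ltngtP (crow (U o1)) (crow (U o2))) => // h.
    have := cl o2 o1 (esym hc) (esym hr) h; lia.
  have : o1 = o2 by apply: inj; apply: cell_eq.
  move=> e; move: Ho; rewrite e; lia.
case: (ltngtP (crow (U o1)).+1 (crow (U o2))) => // h; last lia.
have hn : ((crow (U o1)).+1 < n)%N by have := ltn_ord (U o2).1.2; rewrite /crow in h *; lia.
pose c : cell n := (ccomp (U o1), Ordinal hn, (U o1).2).
have hcs : in_shape lam m c.
  move: (sh o2); rewrite /in_shape /c /ccomp /crow /ccol /=.
  rewrite /ccomp /crow /ccol in hc hr h lt; rewrite hc hr.
  case: ((U o2).1.1) => /andP [] h0 h1; first by rewrite h0; lia.
  apply/andP; split; first lia.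
  apply: leq_trans h1 _; apply: nth_mono => //; lia.
have [e he] := ex c hcs.
have h1 := cl o1 e; have h2 := cl e o2.
rewrite he /c /ccomp /crow /ccol /= in h1 h2.
rewrite /ccomp /crow /ccol in hc hr h.
have := h1 erefl erefl (ltnSn _); have := h2 hc hr h; lia.
Qed.

Lemma diag_neq : ccomp (U o1) = false -> ccomp (U o2) = false ->
  crow (U o1) != crow (U o2) -> ccol (U o1) != ccol (U o2) ->
  ((ccol (U o1))%:Z - (crow (U o1))%:Z != (ccol (U o2))%:Z - (crow (U o2))%:Z).
Proof.
have [inj sh ex rw cl] := @stdP lam m n U HU.
move=> ha hb /eqP hr /eqP hcol; apply/eqP => hd.
case: (ltngtP (crow (U o1)) (crow (U o2))) => h; last by [].
- pose c : cell n := (false, (U o1).1.2, (U o2).2).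
  have hcs : in_shape lam m c.
    move: (sh o2); rewrite /in_shape /c /ccomp /crow /ccol /=.
    rewrite /ccomp /crow /ccol in hb h; rewrite hb => /andP [h0 h1].
    apply/andP; split; first lia.
    apply: leq_trans h1 _; apply: nth_mono => //; lia.
  have [e he] := ex c hcs.
  have h1 := rw o1 e; have h2 := cl e o2.
  rewrite he /c /ccomp /crow /ccol /= in h1 h2.
  rewrite /ccomp /crow /ccol in ha hb h hd.
  have := h1 ha erefl; have := h2 (esym hb) erefl h; lia.
- pose c : cell n := (false, (U o2).1.2, (U o1).2).
  have hcs : in_shape lam m c.
    move: (sh o1); rewrite /in_shape /c /ccomp /crow /ccol /=.
    rewrite /ccomp /crow /ccol in ha h; rewrite ha => /andP [h0 h1].
    apply/andP; split; first lia.
    apply: leq_trans h1 _; apply: nth_mono => //; lia.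
  have [e he] := ex c hcs.
  have h1 := rw o2 e; have h2 := cl e o1.
  rewrite he /c /ccomp /crow /ccol /= in h1 h2.
  rewrite /ccomp /crow /ccol in ha hb h hd.
  have := h1 hb erefl; have := h2 (esym ha) erefl h; lia.
Qed.

End Comb.

Lemma corner lam m n (U : bitab n) (o0 : 'I_n) : is_partition lam -> standard lam m n U ->
  nat_of_ord o0 = 0%N -> ccomp (U o0) = false -> crow (U o0) = 0%N /\ ccol (U o0) = 0%N.
Proof.
move=> Hp HU h0 ha.
have [inj sh ex rw cl] := @stdP lam m n U HU.
have hr : crow (U o0) = 0%N.
  case: (posnP (crow (U o0))) => // h.
  pose c : cell n := (false, o0, (U o0).2).
  have hcs : in_shape lam m c.
    move: (sh o0); rewrite /in_shape /c /ccomp /crow /ccol /=.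
    rewrite /ccomp /crow /ccol in ha h; rewrite ha h0 => /andP [h2 h1].
    apply/andP; split; first lia.
    apply: leq_trans h1 _; apply: nth_mono => //; lia.
  have [e he] := ex c hcs.
  have h2 := cl e o0.
  rewrite he /c /ccomp /crow /ccol /= in h2.
  rewrite /ccomp /crow /ccol in ha h.
  have := h2 (esym ha) erefl; rewrite h0; lia.
split => //.
case: (posnP (ccol (U o0))) => // h.
pose c : cell n := (false, (U o0).1.2, o0).
have hcs : in_shape lam m c.
  move: (sh o0); rewrite /in_shape /c /ccomp /crow /ccol /=.
  rewrite /ccomp /crow /ccol in ha h hr; rewrite ha h0 hr => /andP [h2 h1].
  apply/andP; split; lia.
have [e he] := ex c hcs.
have h2 := rw e o0.
rewrite he /c /ccomp /crow /ccol /= in h2.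
rewrite /ccomp /crow /ccol in ha h.
have := h2 (esym ha) erefl; rewrite h0; lia.
Qed.



Section Swap.
Variables (n : nat) (o1 o2 : 'I_n).
Hypothesis Ho : nat_of_ord o2 = (nat_of_ord o1).+1.

Definition sw (j : 'I_n) : 'I_n :=
  if (nat_of_ord j == nat_of_ord o1) then o2
  else if (nat_of_ord j == nat_of_ord o2) then o1 else j.

Lemma swK j : sw (sw j) = j.
Proof.
rewrite /sw; case: (@eqP _ (nat_of_ord j) (nat_of_ord o1)) => h1.
  rewrite Ho eqxx ifN_eqC; last lia. by apply: val_inj.
case: (@eqP _ (nat_of_ord j) (nat_of_ord o2)) => h2.
  by rewrite eqxx; apply: val_inj.
move/eqP/negbTE: h1 => ->; by move/eqP/negbTE: h2 => ->.
Qed.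

Lemma sw_lt (x y : 'I_n) : (x < y)%N ->
  ~~ ((nat_of_ord x == nat_of_ord o1) && (nat_of_ord y == nat_of_ord o2)) -> (sw x < sw y)%N.
Proof.
move=> hxy; rewrite /sw.
case: (@eqP _ (nat_of_ord x) (nat_of_ord o1)) => hx;
case: (@eqP _ (nat_of_ord x) (nat_of_ord o2)) => hx2;
case: (@eqP _ (nat_of_ord y) (nat_of_ord o1)) => hy;
case: (@eqP _ (nat_of_ord y) (nat_of_ord o2)) => hy2 //=; lia.
Qed.

Lemma swapE (W : bitab n) j : swapU W (nat_of_ord o1).+1 j = W (sw j).
Proof.
rewrite /swapU ffunE eqSS /sw.
have e2 : ((nat_of_ord o1).+2 = (nat_of_ord o2).+1)%N by rewrite Ho.
case: (@eqP _ (nat_of_ord j) (nat_of_ord o1)) => h1.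
  by rewrite /= e2 entE.
rewrite e2 eqSS; case: (@eqP _ (nat_of_ord j) (nat_of_ord o2)) => h2 //.
by rewrite /= entE.
Qed.

Lemma swo1 : sw o1 = o2.
Proof. by rewrite /sw eqxx. Qed.
Lemma swo2 : sw o2 = o1.
Proof. rewrite /sw eqxx ifN_eqC //; lia. Qed.

Lemma swap_invol (W : bitab n) : swapU (swapU W (nat_of_ord o1).+1) (nat_of_ord o1).+1 = W.
Proof. apply/ffunP => j. have h1 := swapE (swapU W (nat_of_ord o1).+1) j. have h2 := swapE W (sw j). rewrite h1 h2 swK. done. Qed.

Lemma ent_swap1 (W : bitab n) : ent (swapU W (nat_of_ord o1).+1) (nat_of_ord o1).+1 = Some (W o2).
Proof. by rewrite entE swapE swo1. Qed.
Lemma ent_swap2 (W : bitab n) : ent (swapU W (nat_of_ord o1).+1) (nat_of_ord o1).+2 = Some (W o1).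
Proof. have e : ((nat_of_ord o1).+2 = (nat_of_ord o2).+1)%N by rewrite Ho. by rewrite e entE swapE swo2. Qed.

Lemma swap_std lam m (U : bitab n) : standard lam m n U ->
  (ccomp (U o1) = ccomp (U o2) -> crow (U o1) = crow (U o2) -> False) ->
  (ccomp (U o1) = ccomp (U o2) -> ccol (U o1) = ccol (U o2) -> False) ->
  standard lam m n (swapU U (nat_of_ord o1).+1).
Proof.
move=> HU Hr Hc.
have [inj sh ex rw cl] := @stdP lam m n U HU.
rewrite /standard; apply/and5P; split.
- apply/injectiveP => x y; rewrite !swapE => /inj h; by rewrite -(swK x) h swK.
- apply/forallP => j; rewrite swapE; exact: sh.
- apply/forallP => c; apply/implyP => hc; have [j hj] := ex c hc.
  apply/existsP; exists (sw j); by rewrite swapE swK hj.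
- apply/forallP => x; apply/forallP => y; apply/implyP; rewrite !swapE.
  case/and3P => /eqP h1 /eqP h2 h3.
  have := rw _ _ h1 h2 h3 => hl.
  rewrite -(swK x) -(swK y); apply: sw_lt => //.
  apply/negP => /andP [/eqP e1 /eqP e2].
  have E1 : sw x = o1 by apply: val_inj.
  have E2 : sw y = o2 by apply: val_inj.
  rewrite E1 E2 in h1 h2; exact: Hr h1 h2.
- apply/forallP => x; apply/forallP => y; apply/implyP; rewrite !swapE.
  case/and3P => /eqP h1 /eqP h2 h3.
  have := cl _ _ h1 h2 h3 => hl.
  rewrite -(swK x) -(swK y); apply: sw_lt => //.
  apply/negP => /andP [/eqP e1 /eqP e2].
  have E1 : sw x = o1 by apply: val_inj.
  have E2 : sw y = o2 by apply: val_inj.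
  rewrite E1 E2 in h1 h2; exact: Hc h1 h2.
Qed.

End Swap.


Lemma qXn_neq1 k : (0 < k)%N -> q ^+ k != 1.
Proof.
move=> hk; rewrite /q -tofracXn -tofrac1 tofrac_eq.
apply/eqP => h; have := congr1 (fun p : {poly algC} => size p) h; rewrite /= size_polyXn size_poly1; lia.
Qed.

Lemma qz_neq1 (d : int) : d != 0 -> q ^ d != 1.
Proof.
case: d => k hk.
- rewrite -exprnP; apply: qXn_neq1; lia.
- rewrite NegzE -invr_expz -exprnP invr_eq1; apply: qXn_neq1; lia.
Qed.

Lemma key3F (F : fieldType) (q0 x lv : F) : x != 0 -> 1 - x != 0 ->
  let c := (q0-1)/(1-x) in let c' := (q0-1)/(1-x^-1) in
  c*c*(x*lv) + (1+c)*(1+c')*lv = q0*lv /\ c*(1+c)*(x*lv) + (1+c)*c'*lv = 0.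
Proof.
move=> hx hx1 c c'.
have hx2 : 1 - x^-1 != 0.
  apply: contra hx1; rewrite subr_eq0 => /eqP h.
  by rewrite subr_eq0 -[x]invrK -h invr1.
have e : c' = - x * c.
  rewrite /c' /c; apply/eqP; rewrite -subr_eq0; apply/eqP.
  field; by rewrite hx hx1 /= -oppr_eq0 opprB.
rewrite e /c; split; field; by rewrite hx1.
Qed.

Lemma key3 (x lv : Fq) : x != 0 -> 1 - x != 0 ->
  let c := (q-1)/(1-x) in let c' := (q-1)/(1-x^-1) in
  c*c*(x*lv) + (1+c)*(1+c')*lv = q*lv /\ c*(1+c)*(x*lv) + (1+c)*c'*lv = 0.
Proof. exact: key3F. Qed.


Lemma lin2 n (u v : vec n) (s1 s2 a1 b1 a2 b2 : Fq) :
  s1 *: (a1 *: u + b1 *: v) + s2 *: (a2 *: v + b2 *: u) =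
  (s1*a1 + s2*b2) *: u + (s1*b1 + s2*a2) *: v.
Proof.
rewrite !scalerDr !scalerA !scalerDl.
by rewrite [s2 * a2 *: v + _]addrC addrACA.
Qed.

Lemma expS1 (x y z : nat) : q ^ (x%:Z + (y.+1)%:Z - z%:Z) = q ^ (x%:Z + y%:Z - z%:Z) * q.
Proof. rewrite -[q in RHS]expr1z -(expfzDr _ _ q_neq0); congr (_ ^ _); lia. Qed.
Lemma expS2 (x y z : nat) : q ^ (x%:Z + y%:Z - (z.+1)%:Z) = q ^ (x%:Z + y%:Z - z%:Z) * q^-1.
Proof. rewrite -exprN1 -(expfzDr _ _ q_neq0); congr (_ ^ _); lia. Qed.

Lemma sc1 (F : fieldType) (q0 e y : F) : q0 != 0 -> q0^-1 * (q0 * (e * y)) * q0 = e * (y * q0).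
Proof. move=> h; field; exact h. Qed.
Lemma sc2 (F : fieldType) (q0 e y : F) : q0 != 0 -> q0^-1 * (-1 * (e * y)) * -1 = e * (y * q0^-1).
Proof. move=> h; field; exact h. Qed.

Lemma fin3 (F : fieldType) (q0 e u x y : F) : q0 != 0 -> (e = 0 \/ (u != 0 /\ 1 - u != 0 /\ x = u * y)) ->
  let c := (q0-1)/(1-u) in let c' := (q0-1)/(1-u^-1) in
  q0^-1 * (c * (e * x) * c + (1+c) * (e*y) * (1+c')) = e * y /\
  c * (e*x) * (1+c) + (1+c)*(e*y)*c' = 0.
Proof.
move=> hq [-> | [hu [hu1 ->]]] c c'.
  by split; ring.
have hx2 : 1 - u^-1 != 0.
  apply: contra hu1; rewrite subr_eq0 => /eqP h.
  by rewrite subr_eq0 -[u]invrK -h invr1.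
have e1 : c' = - u * c.
  rewrite /c' /c; apply/eqP; rewrite -subr_eq0; apply/eqP.
  field; by rewrite hu hu1 /= -oppr_eq0 opprB.
rewrite e1 /c; split; field; by rewrite ?hu1 ?hq.
Qed.

Lemma step lam m n (o1 o2 : 'I_n) : is_partition lam -> nat_of_ord o2 = (nat_of_ord o1).+1 ->
  (forall W, standard lam m n W -> Lact lam m n (nat_of_ord o1).+1 (bv W) =
       (eps W (nat_of_ord o1).+1 * q ^ content W (nat_of_ord o1).+1) *: bv W) ->
  forall U, standard lam m n U -> Lact lam m n (nat_of_ord o1).+2 (bv U) =
       (eps U (nat_of_ord o1).+2 * q ^ content U (nat_of_ord o1).+2) *: bv U.
Proof.
move=> Hp Ho IH U HU.
have eU1 : ent U (nat_of_ord o1).+1 = Some (U o1) := entE _ U o1.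
have e2 : ((nat_of_ord o1).+2 = (nat_of_ord o2).+1)%N by rewrite Ho.
have eU2 : ent U (nat_of_ord o1).+2 = Some (U o2) by rewrite e2 entE.
have eV1 := @ent_swap1 n o1 o2 Ho U.
have eV2 := @ent_swap2 n o1 o2 Ho U.
have VV := @swap_invol n o1 o2 Ho U.
move: eV1 eV2 VV.
set V := swapU U (nat_of_ord o1).+1 => eV1 eV2 VV.
have cV1 : content V (nat_of_ord o1).+1 = content U (nat_of_ord o1).+2 by rewrite /content eV1 eU2.
have cV2 : content V (nat_of_ord o1).+2 = content U (nat_of_ord o1).+1 by rewrite /content eV2 eU1.
have epsV1 : eps V (nat_of_ord o1).+1 = eps U (nat_of_ord o1).+2 by rewrite /eps eV1 eU2.
have epsU1 : eps U (nat_of_ord o1).+1 = (if ccomp (U o1) then 0 else 1) by rewrite /eps eU1.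
have epsU2 : eps U (nat_of_ord o1).+2 = (if ccomp (U o2) then 0 else 1) by rewrite /eps eU2.
have cU1 : content U (nat_of_ord o1).+1 = (nat_of_bool (ccomp (U o1)))%:Z + (ccol (U o1))%:Z - (crow (U o1))%:Z by rewrite /content eU1.
have cU2 : content U (nat_of_ord o1).+2 = (nat_of_bool (ccomp (U o2)))%:Z + (ccol (U o2))%:Z - (crow (U o2))%:Z by rewrite /content eU2.
have IHU := IH U HU.
rewrite Lact_rec /Tact (@act_bv lam m n _ U HU).
case: (boolP (ccomp (U o1) == ccomp (U o2))) => hab.
- move/eqP: (hab) => hab'.
  case: (boolP (crow (U o1) == crow (U o2))) => hr.
  + have TbU : Tb (nat_of_ord o1).+1 U = q *: bv U by rewrite /Tb eU1 eU2 hab hr.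
    have hcol := @adj_row lam m n Hp U HU o1 o2 Ho hab' (eqP hr).
    rewrite TbU LactZ IHU !actZ (@act_bv lam m n _ U HU) TbU !scalerA; congr (_ *: _).
    rewrite epsU2 cU2 -hab' hcol -(eqP hr) epsU1 cU1 expS1.
    exact: sc1 q_neq0.
  + case: (boolP (ccol (U o1) == ccol (U o2))) => hc.
    * have TbU : Tb (nat_of_ord o1).+1 U = (-1) *: bv U by rewrite /Tb eU1 eU2 hab (negbTE hr) hc scaleN1r.
      have hrow := @adj_col lam m n Hp U HU o1 o2 Ho hab' (eqP hc).
      rewrite TbU LactZ IHU !actZ (@act_bv lam m n _ U HU) TbU !scalerA; congr (_ *: _).
      rewrite epsU2 cU2 -hab' hrow -(eqP hc) epsU1 cU1 expS2.
      exact: sc2 q_neq0.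
    * have Hr : ccomp (U o1) = ccomp (U o2) -> crow (U o1) = crow (U o2) -> False.
        by move=> _ h; move: hr; rewrite h eqxx.
      have Hc : ccomp (U o1) = ccomp (U o2) -> ccol (U o1) = ccol (U o2) -> False.
        by move=> _ h; move: hc; rewrite h eqxx.
      have HV := @swap_std n o1 o2 Ho lam m U HU Hr Hc.
      have TbU : Tb (nat_of_ord o1).+1 U =
        ((q-1)/(1 - q^(content U (nat_of_ord o1).+1 - content U (nat_of_ord o1).+2))) *: bv U +
        (1 + (q-1)/(1 - q^(content U (nat_of_ord o1).+1 - content U (nat_of_ord o1).+2))) *: bv V.
        by rewrite /Tb eU1 eU2 hab (negbTE hr) (negbTE hc).
      have TbV : Tb (nat_of_ord o1).+1 V =
        ((q-1)/(1 - q^(content U (nat_of_ord o1).+2 - content U (nat_of_ord o1).+1))) *: bv V +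
        (1 + (q-1)/(1 - q^(content U (nat_of_ord o1).+2 - content U (nat_of_ord o1).+1))) *: bv U.
        rewrite /Tb eV1 eV2 [ccomp (U o2) == _]eq_sym hab [crow (U o2) == _]eq_sym (negbTE hr).
        by rewrite [ccol (U o2) == _]eq_sym (negbTE hc) VV cV1 cV2.
      rewrite TbU LactD !LactZ IHU (IH V HV) !scalerA actD !actZ (@act_bv lam m n _ U HU).
      rewrite (@act_bv lam m n _ V HV) TbU TbV lin2.
      have hw : q ^ (content U (nat_of_ord o1).+2 - content U (nat_of_ord o1).+1) =
        (q ^ (content U (nat_of_ord o1).+1 - content U (nat_of_ord o1).+2))^-1 by rewrite invr_expz opprB.
      have he : eps U (nat_of_ord o1).+1 = eps U (nat_of_ord o1).+2 by rewrite epsU1 epsU2 hab'.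
      have H : eps U (nat_of_ord o1).+2 = 0 \/
        (q ^ (content U (nat_of_ord o1).+1 - content U (nat_of_ord o1).+2) != 0 /\
         1 - q ^ (content U (nat_of_ord o1).+1 - content U (nat_of_ord o1).+2) != 0 /\
         q ^ content U (nat_of_ord o1).+1 =
         q ^ (content U (nat_of_ord o1).+1 - content U (nat_of_ord o1).+2) * q ^ content U (nat_of_ord o1).+2).
        case hB : (ccomp (U o2)); first by left; rewrite epsU2 hB.
        right; split; first exact: expfz_neq0 q_neq0.
        split; last by rewrite -(expfzDr _ _ q_neq0) subrK.
        rewrite subr_eq0 eq_sym; apply: qz_neq1.
        have hA : ccomp (U o1) = false by rewrite hab'.
        have := @diag_neq lam m n Hp U HU o1 o2 Ho hA hB hr hc.
        rewrite cU1 cU2 hA hB /=; lia.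
      rewrite epsV1 cV1 hw he.
      have [h1 h2] := fin3 _ _ _ _ _ _ q_neq0 H.
      by rewrite h2 scale0r addr0 scalerA h1.
- have Hr : ccomp (U o1) = ccomp (U o2) -> crow (U o1) = crow (U o2) -> False.
    by move=> h _; move: hab; rewrite h eqxx.
  have Hc : ccomp (U o1) = ccomp (U o2) -> ccol (U o1) = ccol (U o2) -> False.
    by move=> h _; move: hab; rewrite h eqxx.
  have HV := @swap_std n o1 o2 Ho lam m U HU Hr Hc.
  case hA : (ccomp (U o1)).
  + have hB : ccomp (U o2) = false by move: hab; rewrite hA; case: (ccomp (U o2)).
    have TbU : Tb (nat_of_ord o1).+1 U = (q-1) *: bv U + q *: bv V.
      by rewrite /Tb eU1 eU2 (negbTE hab) hA.
    have TbV : Tb (nat_of_ord o1).+1 V = bv U.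
      by rewrite /Tb eV1 eV2 [_ == _]eq_sym (negbTE hab) hB VV.
    rewrite TbU LactD !LactZ IHU (IH V HV) epsU1 hA !mul0r !scale0r scaler0 add0r.
    rewrite scalerA actZ (@act_bv lam m n _ V HV) TbV scalerA; congr (_ *: _).
    by rewrite epsV1 cV1 mulrA (mulVf q_neq0) mul1r.
  + have hB : ccomp (U o2) = true by move: hab; rewrite hA; case: (ccomp (U o2)).
    have TbU : Tb (nat_of_ord o1).+1 U = bv V.
      by rewrite /Tb eU1 eU2 (negbTE hab) hA.
    by rewrite TbU (IH V HV) epsV1 epsU2 hB !mul0r !scale0r act0 scaler0.
Qed.


Theorem mainTheorem10 (lam : seq nat) (m n : nat) :
  is_partition lam -> (sumn lam + m)%N = n ->
  forall U : bitab n, standard lam m n U ->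
  forall i : nat, (1 <= i <= n)%N ->
  Lact lam m n i (bv U) = (eps U i * q ^ content U i) *: bv U.
Proof.
move=> Hp _ U0 HU0 i; elim: i U0 HU0 => [|[|k] IH] U HU /andP [h1 h2]; first by [].
- pose o0 : 'I_n := Ordinal h2.
  have e1 : ent U 1 = Some (U o0) := entE _ U o0.
  have -> : Lact lam m n 1 (bv U) = q ^ (1 - (1%:Z)) *: Xact lam m n (bv U) by [].
  rewrite subrr expr0z scale1r /Xact (@act_bv lam m n _ U HU) /Xb /eps /content e1.
  case hA : (ccomp (U o0)).
  + by rewrite mul0r scale0r.
  + have [hr hc] := @corner lam m n U o0 Hp HU erefl hA.
    have E : ((nat_of_bool false)%:Z + (0%N)%:Z - (0%N)%:Z = 0 :> int) by [].
    by rewrite hr hc E expr0z mul1r scale1r.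
- have hk1 : (k < n)%N by lia.
  have hk2 : (k.+1 < n)%N by lia.
  apply: (@step lam m n (Ordinal hk1) (Ordinal hk2) Hp erefl _ U HU) => W HW.
  apply: IH => //; apply/andP; split; lia.
Qed.
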